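(* Let $x,y$ be two distinct points of the upper half plane $\mathbb{H}^2=\{z\in\mathbb{C}:\operatorname{Im}z>0\}$. Then the hyperbolic midpoint of the hyperbolic geodesic segment joining $x$ and $y$ is constructible by ruler and compass from the points $0,1,x,y$.
   Context: The hyperbolic distance $\rho$ on $\mathbb{H}^2$ is given by $\cosh\rho(x,y)=1+\frac{|x-y|^2}{2\,\operatorname{Im}x\,\operatorname{Im}y}$. The hyperbolic geodesic segment $J[x,y]$ is the arc joining $x$ and $y$ of the circle orthogonal to the real axis (or the vertical line, if $\operatorname{Re}x=\operatorname{Re}y$) containing $x,y$; its hyperbolic midpoint is the unique $z\in J[x,y]$ with $\rho(x,z)=\rho(z,y)$. A point is constructible by ruler and compass from a finite set $S\subset\mathbb{C}$ if it belongs to the smallest set $C\supseteq S$ closed under adding intersection points of lines through two distinct points of $C$ and circles with centre in $C$ passing through a point of $C$ (the real axis $\partial\mathbb{H}^2$ is the line through $0$ and $1$). *)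

(* Defs.v *)
From Stdlib Require Import Reals.
Open Scope R_scope.

Definition pt := (R * R)%type.
Definition Re (z : pt) : R := fst z.
Definition Im (z : pt) : R := snd z.

Definition in_H2 (z : pt) : Prop := Im z > 0.

Definition dist2 (x y : pt) : R := (Re x - Re y)^2 + (Im x - Im y)^2.

Definition cosh_rho (x y : pt) : R := 1 + dist2 x y / (2 * Im x * Im y).

Definition hdist (x y : pt) : R :=
  let c := cosh_rho x y in ln (c + sqrt (c * c - 1)).

Definition geod_seg (x y : pt) (z : pt) : Prop :=
  if Req_EM_T (Re x) (Re y) then
    Re z = Re x /\ Rmin (Im x) (Im y) <= Im z <= Rmax (Im x) (Im y)
  else
    (* arc, between x and y, of the circle orthogonal to the real axis
       (centre (a,0) on the real axis) through x and y *)
    exists a : R,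
      dist2 x (a, 0) = dist2 y (a, 0) /\
      dist2 z (a, 0) = dist2 x (a, 0) /\
      Im z > 0 /\
      Rmin (Re x) (Re y) <= Re z <= Rmax (Re x) (Re y).

Definition hyp_midpoint (x y z : pt) : Prop :=
  geod_seg x y z /\ hdist x z = hdist z y.

Definition line (p q : pt) (w : pt) : Prop :=
  (Re w - Re p) * (Im q - Im p) - (Im w - Im p) * (Re q - Re p) = 0.
Definition circle (c d : pt) (w : pt) : Prop := dist2 w c = dist2 d c.

Definition same_set (f g : pt -> Prop) : Prop := forall w, f w <-> g w.

Inductive constructible (S : pt -> Prop) : pt -> Prop :=
| cons_base z : S z -> constructible S z
| cons_LL p q r s z :
    constructible S p -> constructible S q ->
    constructible S r -> constructible S s ->
    p <> q -> r <> s -> ~ same_set (line p q) (line r s) ->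
    line p q z -> line r s z -> constructible S z
| cons_LC p q c d z :
    constructible S p -> constructible S q ->
    constructible S c -> constructible S d ->
    p <> q -> line p q z -> circle c d z -> constructible S z
| cons_CC c d c' d' z :
    constructible S c -> constructible S d ->
    constructible S c' -> constructible S d' ->
    ~ same_set (circle c d) (circle c' d') ->
    circle c d z -> circle c' d' z -> constructible S z.

Definition base_set (x y : pt) (w : pt) : Prop :=
  w = (0, 0) \/ w = (1, 0) \/ w = x \/ w = y.

(* Main.v *)
From Stdlib Require Import Reals Lra Psatz Nsatz.
From Stdlib Require Import Ranalysis5.
From Coquelicot Require Import Coquelicot.
Require Import Defs.
Open Scope R_scope.

Lemma cosh_rho_sym a b : cosh_rho a b = cosh_rho b a.
Proof. unfold cosh_rho, dist2. f_equal. f_equal; ring. Qed.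

Lemma hdist_sym a b : hdist a b = hdist b a.
Proof. unfold hdist. rewrite cosh_rho_sym. reflexivity. Qed.

Lemma cosh_ge1 a b : Im a > 0 -> Im b > 0 -> 1 <= cosh_rho a b.
Proof.
  intros Ha Hb. unfold cosh_rho, dist2.
  assert (0 <= ((Re a - Re b) ^ 2 + (Im a - Im b) ^ 2) / (2 * Im a * Im b)).
  { unfold Rdiv. apply Rmult_le_pos.
    - pose proof (pow2_ge_0 (Re a - Re b)); pose proof (pow2_ge_0 (Im a - Im b)); lra.
    - left; apply Rinv_0_lt_compat. nra. }
  lra.
Qed.

Lemma F_inj c c' : 1 <= c -> 1 <= c' ->
  ln (c + sqrt (c * c - 1)) = ln (c' + sqrt (c' * c' - 1)) -> c = c'.
Proof.
  intros H1 H2 H.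
  pose proof (sqrt_pos (c*c-1)); pose proof (sqrt_pos (c'*c'-1)).
  apply ln_inv in H; try lra.
  destruct (Rtotal_order c c') as [h|[h|h]]; auto.
  - assert (sqrt (c*c-1) <= sqrt (c'*c'-1)) by (apply sqrt_le_1_alt; nra). lra.
  - assert (sqrt (c'*c'-1) <= sqrt (c*c-1)) by (apply sqrt_le_1_alt; nra). lra.
Qed.

Lemma bis_hdist x z y : Im x > 0 -> Im y > 0 -> Im z > 0 ->
  (hdist x z = hdist z y <-> dist2 x z * Im y = dist2 z y * Im x).
Proof.
  intros Hx Hy Hz. split.
  - intros H. unfold hdist in H. apply F_inj in H; try (apply cosh_ge1; auto).
    unfold cosh_rho in H.
    set (d1 := dist2 x z) in *. set (d2 := dist2 z y) in *.
    assert (E: d1 / (2 * Im x * Im z) = d2 / (2 * Im z * Im y)) by lra.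
    assert (E1: d1 * Im y = d1 / (2 * Im x * Im z) * (2 * Im x * Im z * Im y)) by (field; lra).
    assert (E2: d2 * Im x = d2 / (2 * Im z * Im y) * (2 * Im x * Im z * Im y)) by (field; lra).
    rewrite E1, E2, E. reflexivity.
  - intros H. unfold hdist. replace (cosh_rho z y) with (cosh_rho x z); [reflexivity|].
    unfold cosh_rho. set (d1 := dist2 x z) in *. set (d2 := dist2 z y) in *.
    assert (E: d1 = d2 * Im x / Im y).
    { apply (Rmult_eq_reg_r (Im y)); [| lra]. rewrite H. field. lra. }
    rewrite E. field. lra.
Qed.

Lemma hyp_midpoint_sym p q z : hyp_midpoint p q z -> hyp_midpoint q p z.
Proof.
  intros [Hg Hd]. split.
  - unfold geod_seg in *.
    destruct (Req_EM_T (Re p) (Re q)); destruct (Req_EM_T (Re q) (Re p)).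
    + rewrite Rmin_comm, Rmax_comm. destruct Hg. split; [congruence| auto].
    + exfalso; auto.
    + exfalso; auto.
    + destruct Hg as [a [h1 [h2 [h3 h4]]]]. exists a.
      rewrite Rmin_comm, Rmax_comm. repeat split; try lra.
  - rewrite (hdist_sym q z), (hdist_sym z p). auto.
Qed.
Lemma sq_between t p1 q1 a : p1 <= t <= q1 ->
  (t-a)^2 <= (p1-a)^2 \/ (t-a)^2 <= (q1-a)^2.
Proof.
  intros [h1 h2]. destruct (Rle_or_lt (t+p1-2*a) 0).
  - left; nra.
  - right; nra.
Qed.

Lemma exist_arc p1 p2 q1 q2 : p1 < q1 -> 0 < p2 -> 0 < q2 ->
  exists z, hyp_midpoint (p1,p2) (q1,q2) z.
Proof.
  intros Hpq Hp Hq.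
  set (a := ((q1^2+q2^2) - (p1^2+p2^2)) / (2*(q1-p1))).
  assert (Ha: 2*a*(q1-p1) = (q1^2+q2^2)-(p1^2+p2^2)) by (unfold a; field; lra).
  set (r2 := (p1-a)^2 + p2^2).
  assert (Hr: r2 = (q1-a)^2 + q2^2) by (unfold r2; nra).
  assert (Hpos: forall t, p1 <= t <= q1 -> 0 < r2 - (t-a)^2).
  { intros t Ht. destruct (sq_between t p1 q1 a Ht); nra. }
  set (f := fun t => let s := sqrt (r2 - (t-a)^2) in
              ((p1-t)^2+(p2-s)^2)*q2 - ((t-q1)^2 + (s-q2)^2)*p2).
  assert (Hc: forall t, p1 <= t <= q1 -> continuity_pt f t).
  { intros t Ht. apply continuity_pt_filterlim. apply (@ex_derive_continuous R_AbsRing R_NormedModule).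
    unfold f. auto_derive. apply Hpos in Ht. lra. }
  assert (Hfp: f p1 < 0).
  { unfold f; cbv zeta. replace (r2 - (p1-a)^2) with (p2^2) by (unfold r2; ring).
    rewrite sqrt_pow2 by lra.
    assert (0 < (q1-p1)*(q1-p1)) by (apply Rmult_lt_0_compat; lra).
    assert (0 < (q1-p1)*(q1-p1)*p2) by (apply Rmult_lt_0_compat; lra).
    assert (0 < (q1-p1)*(q1-p1)*q2) by (apply Rmult_lt_0_compat; lra).
    assert (0 <= (p2-q2)*(p2-q2)*p2) by (apply Rmult_le_pos; [apply Rle_0_sqr|lra]).
    assert (0 <= (p2-q2)*(p2-q2)*q2) by (apply Rmult_le_pos; [apply Rle_0_sqr|lra]).
    nra. }
  assert (Hfq: 0 < f q1).
  { unfold f; cbv zeta. replace (r2 - (q1-a)^2) with (q2^2) by (rewrite Hr; ring).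
    rewrite sqrt_pow2 by lra.
    assert (0 < (q1-p1)*(q1-p1)) by (apply Rmult_lt_0_compat; lra).
    assert (0 < (q1-p1)*(q1-p1)*p2) by (apply Rmult_lt_0_compat; lra).
    assert (0 < (q1-p1)*(q1-p1)*q2) by (apply Rmult_lt_0_compat; lra).
    assert (0 <= (p2-q2)*(p2-q2)*p2) by (apply Rmult_le_pos; [apply Rle_0_sqr|lra]).
    assert (0 <= (p2-q2)*(p2-q2)*q2) by (apply Rmult_le_pos; [apply Rle_0_sqr|lra]).
    nra. }
  destruct (IVT_interv f p1 q1 Hc Hpq Hfp Hfq) as [t0 [Ht0 Hf0]].
  set (s := sqrt (r2 - (t0-a)^2)).
  assert (Hs: 0 < s) by (apply sqrt_lt_R0; auto).
  assert (Hss: s*s = r2 - (t0-a)^2) by (apply sqrt_sqrt; left; auto).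
  exists (t0, s). split.
  - unfold geod_seg. simpl Re.
    destruct (Req_EM_T p1 q1) as [e|e]; [lra|].
    exists a. unfold dist2, Re, Im; simpl. repeat split.
    + nra.
    + nra.
    + lra.
    + rewrite Rmin_left; lra.
    + rewrite Rmax_right; lra.
  - apply bis_hdist; unfold Im; simpl; try lra.
    unfold f in Hf0. fold s in Hf0. unfold dist2, Re, Im; simpl. lra.
Qed.
Definition hh := sqrt 3 / 2.
Definition bu (p q : pt) : pt :=
  ((fst p + fst q)/2 - hh*(snd q - snd p), (snd p + snd q)/2 + hh*(fst q - fst p)).
Definition bv (p q : pt) : pt :=
  ((fst p + fst q)/2 + hh*(snd q - snd p), (snd p + snd q)/2 - hh*(fst q - fst p)).
Definition mid (p q : pt) : pt := ((fst p + fst q)/2, (snd p + snd q)/2).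

Lemma hh2 : hh * hh = 3/4.
Proof.
  unfold hh. assert (sqrt 3 * sqrt 3 = 3) by (apply sqrt_sqrt; lra).
  replace (sqrt 3 / 2 * (sqrt 3 / 2)) with (sqrt 3 * sqrt 3 / 4) by field.
  rewrite H. field.
Qed.

Lemma hh_pos : 0 < hh.
Proof. unfold hh. pose proof (sqrt_lt_R0 3 ltac:(lra)). lra. Qed.

Lemma pt_neq (p q : pt) : p <> q -> fst p <> fst q \/ snd p <> snd q.
Proof.
  destruct p as [p1 p2], q as [q1 q2]; simpl; intros H.
  destruct (Req_dec p1 q1); destruct (Req_dec p2 q2); subst; auto.
Qed.

Lemma dist2_pos p q : p <> q -> 0 < dist2 p q.
Proof.
  intros H; apply pt_neq in H. unfold dist2, Re, Im.
  pose proof (pow2_ge_0 (fst p - fst q)); pose proof (pow2_ge_0 (snd p - snd q)).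
  destruct H as [H|H].
  - assert (0 < (fst p - fst q)²) by (apply Rsqr_pos_lt; lra). unfold Rsqr in *. simpl. lra.
  - assert (0 < (snd p - snd q)²) by (apply Rsqr_pos_lt; lra). unfold Rsqr in *. simpl. lra.
Qed.

Lemma line_bis_eq p q w :
  (Re w - Re (bu p q)) * (Im (bv p q) - Im (bu p q)) - (Im w - Im (bu p q)) * (Re (bv p q) - Re (bu p q))
  = - hh * (dist2 w p - dist2 w q).
Proof. unfold bu, bv, dist2, Re, Im; simpl. field. Qed.

Lemma line_bis p q w : dist2 w p = dist2 w q -> line (bu p q) (bv p q) w.
Proof. intros H. unfold line. rewrite line_bis_eq. rewrite H. ring. Qed.

Lemma bu_neq_bv p q : p <> q -> bu p q <> bv p q.
Proof.
  intros H E. apply pt_neq in H. pose proof hh_pos.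
  unfold bu, bv in E. injection E as E1 E2.
  destruct H as [H|H].
  - assert (hh * (fst q - fst p) = 0) by lra.
    apply Rmult_integral in H1. lra.
  - assert (hh * (snd q - snd p) = 0) by lra.
    apply Rmult_integral in H1. lra.
Qed.

Lemma circ_distinct p q : p <> q -> ~ same_set (circle p q) (circle q p).
Proof.
  intros H S. pose proof (dist2_pos _ _ H).
  assert (circle p q p).
  { apply (proj2 (S p)). unfold circle. reflexivity. }
  unfold circle, dist2 in H1, H0. unfold Re, Im in *. simpl in *. lra.
Qed.

Lemma c_bu S p q : constructible S p -> constructible S q -> p <> q ->
  constructible S (bu p q) /\ constructible S (bv p q).
Proof.
  intros Hp Hq H. pose proof hh2.
  split; apply (cons_CC S p q q p); auto; try apply circ_distinct; auto;
  unfold circle, bu, bv, dist2, Re, Im; simpl;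
  match goal with |- ?l = ?r =>
    assert (E: l - r = (hh*hh-3/4)*((fst q-fst p)^2+(snd q-snd p)^2)) by (simpl; field);
    rewrite hh2 in E; lra end.
Qed.

Lemma line_self1 p q : line p q p.
Proof. unfold line. ring. Qed.

Lemma c_mid S p q : constructible S p -> constructible S q -> p <> q ->
  constructible S (mid p q).
Proof.
  intros Hp Hq H. destruct (c_bu S p q Hp Hq H) as [Hu Hv].
  apply (cons_LL S p q (bu p q) (bv p q)); auto.
  - apply bu_neq_bv; auto.
  - intros Sm. assert (line (bu p q) (bv p q) p) by (apply (proj1 (Sm p)); apply line_self1).
    unfold line in H0. rewrite line_bis_eq in H0.
    pose proof (dist2_pos _ _ H). pose proof hh_pos.
    assert (dist2 p p = 0) by (unfold dist2; ring).
    rewrite H3 in H0. assert (hh * dist2 p q = 0) by lra.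
    apply Rmult_integral in H4. lra.
  - unfold line, mid, Re, Im; simpl. field.
  - apply line_bis. unfold mid, dist2, Re, Im; simpl. field.
Qed.
Definition O0 : pt := (0,0).
Definition I0 : pt := (1,0).

Lemma O_neq_I : O0 <> I0.
Proof. unfold O0, I0. intros E. injection E. lra. Qed.

Lemma line_OI w : snd w = 0 -> line O0 I0 w.
Proof. intros H. unfold line, O0, I0, Re, Im; simpl. rewrite H. ring. Qed.

Lemma line_OI_inv w : line O0 I0 w -> snd w = 0.
Proof. unfold line, O0, I0, Re, Im; simpl. intros H. lra. Qed.

Lemma not_same_xy_OI x y : snd x <> 0 -> ~ same_set (line x y) (line O0 I0).
Proof.
  intros Hx S. apply Hx. apply line_OI_inv. apply (proj1 (S x)). apply line_self1.
Qed.

Lemma main_constr x1 x2 y1 y2 z : 0 < x2 -> 0 < y2 -> (x1,x2) <> (y1,y2) ->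
  hyp_midpoint (x1,x2) (y1,y2) z -> constructible (base_set (x1,x2) (y1,y2)) z.
Proof.
  intros Hx Hy Hxy [Hg Hd].
  set (S := base_set (x1,x2) (y1,y2)).
  assert (cO : constructible S O0) by (apply cons_base; unfold S, base_set, O0; auto).
  assert (cI : constructible S I0) by (apply cons_base; unfold S, base_set, I0; auto).
  assert (cx : constructible S (x1,x2)) by (apply cons_base; unfold S, base_set; auto).
  assert (cy : constructible S (y1,y2)) by (apply cons_base; unfold S, base_set; auto).
  destruct z as [z1 z2].
  unfold geod_seg in Hg. simpl in Hg.
  destruct (Req_EM_T x1 y1) as [e|n].
  -
    subst y1. destruct Hg as [Hz1 [Hz2 _]]. simpl in Hz1, Hz2.
    assert (Hz: 0 < z2) by (assert (0 < Rmin x2 y2) by (apply Rmin_glb_lt; lra); lra).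
    subst z1.
    apply bis_hdist in Hd; unfold Im; simpl; try lra.
    unfold dist2, Re, Im in Hd; simpl in Hd.
    assert (Hne: x2 <> y2) by (intros E; apply Hxy; rewrite E; reflexivity).
    assert (Hzz: z2 * z2 = x2 * y2).
    { assert (E: (x2 - y2) * (x2 * y2 - z2 * z2) = 0) by nra.
      apply Rmult_integral in E. destruct E; lra. }
    set (P := (x1, 0)).
    assert (cP : constructible S P).
    { apply (cons_LL S (x1,x2) (x1,y2) O0 I0); auto.
      - apply O_neq_I.
      - apply not_same_xy_OI; simpl; lra.
      - unfold line, P, Re, Im; simpl; ring.
      - apply line_OI; reflexivity. }
    set (xb := (x1, -x2)).
    assert (cxb : constructible S xb).
    { apply (cons_LC S (x1,x2) (x1,y2) P (x1,x2)); auto.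
      - unfold line, xb, Re, Im; simpl; ring.
      - unfold circle, xb, P, dist2, Re, Im; simpl; ring. }
    assert (cN : constructible S (mid xb (x1,y2))).
    { apply c_mid; auto. unfold xb; intros E; injection E; lra. }
    set (s := sqrt (x2 * y2)).
    assert (Hs : s * s = x2 * y2) by (apply sqrt_sqrt; nra).
    assert (cQ : constructible S (x1 + s, 0)).
    { apply (cons_LC S O0 I0 (mid xb (x1,y2)) (x1,y2)); auto.
      - apply O_neq_I.
      - apply line_OI; reflexivity.
      - unfold circle, mid, xb, dist2, Re, Im; simpl. field_simplify. nra. }
    apply (cons_LC S (x1,x2) (x1,y2) P (x1 + s, 0)); auto.
    + unfold line, Re, Im; simpl; ring.
    + unfold circle, P, dist2, Re, Im; simpl. nra.
  -
    destruct Hg as [a [Ha1 [Ha2 [Hz _]]]].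
    simpl in Hz.
    apply bis_hdist in Hd; unfold Im; simpl; try lra.
    unfold dist2, Re, Im in Hd, Ha1, Ha2; simpl in Hd, Ha1, Ha2.
    destruct (c_bu S (x1,x2) (y1,y2) cx cy Hxy) as [cu cv].
    assert (cA : constructible S (a, 0)).
    { apply (cons_LL S O0 I0 (bu (x1,x2) (y1,y2)) (bv (x1,x2) (y1,y2))); auto.
      - apply O_neq_I.
      - apply bu_neq_bv; auto.
      - intros Sm.
        assert (h0 := proj1 (Sm O0) (line_OI O0 eq_refl)).
        assert (h1 := proj1 (Sm I0) (line_OI I0 eq_refl)).
        unfold line in h0, h1. rewrite line_bis_eq in h0, h1.
        pose proof hh_pos.
        assert (e0: dist2 O0 (x1,x2) - dist2 O0 (y1,y2) = 0).
        { assert (hh * (dist2 O0 (x1,x2) - dist2 O0 (y1,y2)) = 0) by lra.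
          apply Rmult_integral in H0; destruct H0; lra. }
        assert (e1: dist2 I0 (x1,x2) - dist2 I0 (y1,y2) = 0).
        { assert (hh * (dist2 I0 (x1,x2) - dist2 I0 (y1,y2)) = 0) by lra.
          apply Rmult_integral in H0; destruct H0; lra. }
        unfold dist2, O0, I0, Re, Im in e0, e1; simpl in e0, e1.
        apply n. nra.
      - apply line_OI; reflexivity.
      - apply line_bis. unfold dist2, Re, Im; simpl. nra. }
    destruct (Req_dec x2 y2) as [ey|ny].
    + subst y2.
      apply (cons_LC S (bu (x1,x2) (y1,x2)) (bv (x1,x2) (y1,x2)) (a,0) (x1,x2)); auto.
      * apply bu_neq_bv; auto.
      * apply line_bis. unfold dist2, Re, Im; simpl.
        apply (Rmult_eq_reg_r x2); [| lra]. nra.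
    + set (b := (x1*y2 - y1*x2)/(y2-x2)).
      assert (Hb : b * (y2 - x2) = x1*y2 - y1*x2) by (unfold b; field; lra).
      assert (cB : constructible S (b, 0)).
      { apply (cons_LL S (x1,x2) (y1,y2) O0 I0); auto.
        - apply O_neq_I.
        - apply not_same_xy_OI; simpl; lra.
        - unfold line, Re, Im; simpl. nra.
        - apply line_OI; reflexivity. }
      set (m := (a + b) / 2).
      assert (cM : constructible S (m, 0)).
      { destruct (Req_dec a b) as [eab|nab].
        - replace (m,0) with (a,0); auto. unfold m; rewrite eab; f_equal; field.
        - replace (m,0) with (mid (a,0) (b,0)).
          + apply c_mid; auto. intros E; injection E; lra.
          + unfold mid, m; simpl; f_equal; field. }
      assert (Htan : (z1 - a) * (z1 - b) + z2 * z2 = 0).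
      { assert (E: (y2 - x2) * ((z1 - a) * (z1 - b) + z2 * z2) = 0).
        { clear cM. clearbody b. clear -Ha1 Ha2 Hd Hb. nsatz. }
        apply Rmult_integral in E; destruct E; lra. }
      apply (cons_CC S (a,0) (x1,x2) (m,0) (b,0)); auto.
      * intros Sm.
        set (r := sqrt ((x1-a)^2 + x2^2)).
        assert (0 <= (x1-a)^2) by apply pow2_ge_0.
        assert (0 < x2^2) by (apply pow_lt; lra).
        assert (Hr : r * r = (x1-a)^2 + x2^2) by (apply sqrt_sqrt; lra).
        assert (Hr0 : 0 < r) by (apply sqrt_lt_R0; lra).
        assert (w1 := proj1 (Sm (a + r, 0))).
        assert (w2 := proj1 (Sm (a - r, 0))).
        unfold circle, dist2, Re, Im in w1, w2; simpl in w1, w2.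
        assert (E1 := w1 ltac:(nra)). assert (E2 := w2 ltac:(nra)).
        assert (E3: r * (a - m) = 0) by nra.
        apply Rmult_integral in E3. destruct E3 as [E3|E3]; [lra|].
        unfold m in E3. assert (a = b) by lra. subst m. nra.
      * unfold circle, dist2, Re, Im; simpl.
        match goal with |- ?l = ?r => assert (E: l - r = (z1-a)*(z1-b)+z2*z2) by (unfold m; field) end.
        lra.
Qed.

Theorem theorem1p1 (x y : pt) :
  in_H2 x -> in_H2 y -> x <> y ->
  (exists z : pt, hyp_midpoint x y z) /\
  (forall z : pt, hyp_midpoint x y z -> constructible (base_set x y) z).
Proof.
  intros Hx Hy Hxy. destruct x as [x1 x2], y as [y1 y2].
  unfold in_H2, Im in Hx, Hy; simpl in Hx, Hy.
  split.
  - destruct (Rtotal_order x1 y1) as [h|[h|h]].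
    + apply exist_arc; auto.
    + subst y1. exists (x1, sqrt (x2 * y2)).
      set (s := sqrt (x2 * y2)).
      assert (Hs : s * s = x2 * y2) by (apply sqrt_sqrt; nra).
      assert (Hs0 : 0 < s) by (apply sqrt_lt_R0; nra).
      split.
      * unfold geod_seg; simpl. destruct (Req_EM_T x1 x1) as [_|c]; [|exfalso; auto].
        split; [reflexivity|].
        unfold Rmin, Rmax; destruct (Rle_dec x2 y2); split; nra.
      * apply bis_hdist; unfold Im; simpl; try lra.
        unfold dist2, Re, Im; simpl. nra.
    + destruct (exist_arc y1 y2 x1 x2 h Hy Hx) as [z Hz].
      exists z. apply hyp_midpoint_sym; auto.
  - intros z Hz. apply main_constr; auto.
Qed.
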